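(* Let $d\ge 1$ be an integer and let $n$ be a positive integer that has no prime divisor less than $2^d$. Then $n^{d-1}$ queens can be placed on $\mathbb{Z}_n^d$ without conflict.
   Context: A queen on $\mathbb{Z}_n^d$ can move any number of times by a vector $\mathbf{x}\in\{-1,0,1\}^d\setminus\{\mathbf{0}\}$ (coordinates modulo $n$). Queens occupy distinct fields; two queens at distinct fields $\mathbf{u},\mathbf{v}\in\mathbb{Z}_n^d$ are in conflict if $\mathbf{v}-\mathbf{u}=t\mathbf{x}$ for some $t\in\mathbb{Z}_n$ and some nonzero $\mathbf{x}\in\{-1,0,1\}^d$. A placement is without conflict if no two queens are in conflict. *)

(* Defs.v *)
From mathcomp Require Import all_boot all_order all_algebra.
Set Implicit Arguments. Unset Strict Implicit. Unset Printing Implicit Defensive.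
Import GRing.Theory Num.Theory.

Definition field (n d : nat) := {ffun 'I_d -> 'I_n}.

Definition queen_dir (d : nat) (x : 'I_d -> int) : Prop :=
  (forall i, x i \in [:: (-1)%R; 0%R; 1%R]) /\ (exists i, x i != 0%R).

Definition in_conflict (n d : nat) (u v : field n d) : Prop :=
  u <> v /\
  exists (t : int) (x : 'I_d -> int), queen_dir x /\
    forall i, ((nat_of_ord (v i))%:Z = (nat_of_ord (u i))%:Z + t * x i %[mod n])%Z.

Definition conflict_free (n d : nat) (Q : {set field n d}) : Prop :=
  forall u v, u \in Q -> v \in Q -> ~ in_conflict u v.

(* Main.v *)
Require Import Defs.
From mathcomp Require Import all_boot all_order all_algebra.
From mathcomp Require Import zify ring.
Import GRing.Theory Num.Theory.
Set Implicit Arguments. Unset Strict Implicit. Unset Printing Implicit Defensive.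

Definition S2 k (y : 'I_k -> int) : int := (\sum_(i < k) (2 ^ i)%:Z * y i)%R.

Lemma S2_lemma k (y : 'I_k -> int) : (forall i, `|y i| <= 1)%R ->
  (`|S2 y| <= (2 ^ k)%:Z - 1)%R /\ (S2 y = 0 -> forall i, y i = 0).
Proof.
elim: k y => [|k IH] y Hy.
  by split; [rewrite /S2 big_ord0 | move=> _ [] ].
have [IH1 IH2] := IH (fun j => y (lift ord0 j)) (fun j => Hy _).
have E : S2 y = (y ord0 + 2 * S2 (fun j : 'I_k => y (lift ord0 j)))%R.
  rewrite /S2 big_ord_recl /= expn0 mul1r mulr_sumr; congr (_ + _)%R.
  by apply: eq_bigr => j _; rewrite /bump /= expnS PoszM mulrA.
have H0 := Hy ord0.
rewrite E expnS PoszM; split; first lia.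
move=> Hz.
have Hy0 : y ord0 = 0 by lia.
have HS : S2 (fun j : 'I_k => y (lift ord0 j)) = 0 by lia.
move=> i; case: (unliftP ord0 i) => [j ->|->] //.
exact: IH2.
Qed.

Lemma mem3 (z : int) : z \in [:: (-1)%R; 0%R; 1%R] -> (`|z| <= 1)%R.
Proof. by rewrite !inE => /or3P [] /eqP ->. Qed.

Lemma PoszSum k (F : 'I_k -> nat) : Posz (\sum_(j<k) F j) = (\sum_(j<k) Posz (F j))%R.
Proof. exact: (big_morph _ PoszD (erefl _)). Qed.

Section Main.
Variables (k n : nat) (hn : 0 < n).

Definition Sg (g : {ffun 'I_k -> 'I_n}) : nat := \sum_(j < k) 2 ^ j.+1 * g j.

Definition fq (g : {ffun 'I_k -> 'I_n}) : field n k.+1 :=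
  [ffun i => if unlift ord0 i is Some j then g j else Ordinal (ltn_pmod (Sg g) hn)].

Lemma fq_lift g j : fq g (lift ord0 j) = g j.
Proof. by rewrite /fq ffunE liftK. Qed.

Lemma fq_0 g : nat_of_ord (fq g ord0) = Sg g %% n.
Proof. by rewrite /fq ffunE unlift_none. Qed.

Lemma fq_inj : injective fq.
Proof. by move=> g h E; apply/ffunP => j; rewrite -!fq_lift E. Qed.

End Main.

Theorem mainTheorem7 (d n : nat) (hd : 1 <= d) (hn : 0 < n)
  (hp : forall p, prime p -> p %| n -> 2 ^ d <= p) :
  exists Q : {set field n d}, #|Q| = n ^ d.-1 /\ conflict_free Q.
Proof.
case: d hd hp => // k _ hp.
exists [set fq hn g | g : {ffun 'I_k -> 'I_n}]; split.
  by rewrite card_imset /=; [rewrite card_ffun !card_ord | exact: fq_inj].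
move=> u v /imsetP [g _ ->] /imsetP [h _ ->] [Hne [t [x [[Hx [i0 Hi0]] H]]]].
apply: Hne.
have Hj : forall j, (n %| ((h j)%:Z - (g j)%:Z - t * x (lift ord0 j))%R)%Z.
  move=> j; have := H (lift ord0 j); rewrite !fq_lift => /eqP.
  by rewrite eqz_mod_dvd opprD addrA.
have H0 : (n %| ((Sg h %% n)%:Z - (Sg g %% n)%:Z - t * x ord0)%R)%Z.
  have := H ord0; rewrite !fq_0 => /eqP.
  by rewrite eqz_mod_dvd opprD addrA.
set m := (x ord0 - 2 * S2 (fun j : 'I_k => x (lift ord0 j)))%R.
have Htm : (n %| (t * m)%R)%Z.
  set D := (\sum_(j < k) (Posz (2 ^ j.+1)) * ((Posz (h j)) - (Posz (g j)) - t * x (lift ord0 j)))%R.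
  have HD : (n %| D)%Z by apply: rpred_sum => j _; apply: dvdz_mull.
  have ED : D = ((Posz (Sg h)) - (Posz (Sg g)) - t * (2 * S2 (fun j : 'I_k => x (lift ord0 j))))%R.
    rewrite /D /Sg !PoszSum /S2 !mulr_sumr -!sumrB; apply: eq_bigr => j _.
    rewrite PoszM expnS PoszM PoszM; ring.
  have eSh : (Posz (Sg h)) = ((Posz (Sg h %/ n)) * (Posz n) + (Posz (Sg h %% n)))%R.
    by rewrite {1}(divn_eq (Sg h) n) PoszD PoszM.
  have eSg : (Posz (Sg g)) = ((Posz (Sg g %/ n)) * (Posz n) + (Posz (Sg g %% n)))%R.
    by rewrite {1}(divn_eq (Sg g) n) PoszD PoszM.
  have -> : (t * m = - ((Posz (Sg h %% n)) - (Posz (Sg g %% n)) - t * x ord0) + D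
      - ((Posz (Sg h %/ n)) - (Posz (Sg g %/ n))) * (Posz n))%R.
    rewrite ED eSh eSg /m; ring.
  by rewrite rpredB ?rpredD ?rpredN // dvdz_mull.
have Hxa : forall i, (`|x i| <= 1)%R := fun i => mem3 (Hx i).
have [B1 B2] := @S2_lemma _ (fun j : 'I_k => x (lift ord0 j)) (fun j => Hxa _).
have H0a := Hxa ord0.
have Hm0 : m != 0%R.
  apply/eqP => Hm; rewrite /m in Hm.
  have Hx0 : x ord0 = 0%R by lia.
  have HS : S2 (fun j : 'I_k => x (lift ord0 j)) = 0%R by lia.
  move: Hi0; case: (unliftP ord0 i0) => [j ->|->].
    by rewrite (B2 HS j) eqxx.
  by rewrite Hx0 eqxx.
have Hmb : (`|m| < Posz (2 ^ k.+1))%R.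
  rewrite /m expnS PoszM; move: B1 H0a; clear; set S := S2 _; set P := Posz (2 ^ k); lia.
have Hcop : coprimez n m.
  rewrite coprimezE /=.
  have Hm' : (0 < `|m|)%N by rewrite absz_gt0.
  have Hmb' : (`|m| < 2^k.+1)%N by move: Hmb; clear; rewrite -ltz_nat abszE.
  have Hg0 : 0 < gcdn n `|m| by rewrite gcdn_gt0 hn.
  rewrite /coprime; case E: (gcdn n `|m|) => [|[|g']] //; first by rewrite E in Hg0.
  have Hg1 : 1 < gcdn n `|m| by rewrite E.
  have Hpr := pdiv_prime Hg1.
  have Hpd := pdiv_dvd (gcdn n `|m|).
  have Hpn := hp _ Hpr (dvdn_trans Hpd (dvdn_gcdl _ _)).
  have Hpm := dvdn_leq Hm' (dvdn_trans Hpd (dvdn_gcdr _ _)).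
  move: Hpn Hpm Hmb'; clear; set p := pdiv _; set M := 2 ^ _; lia.
have Ht : (n %| t)%Z by rewrite -(Gauss_dvdzl t Hcop).
congr (fq hn _); apply/ffunP => j.
have := rpredD (Hj j) (dvdz_mulr (x (lift ord0 j)) Ht); rewrite subrK => /dvdzP [q Hq].
have := ltn_ord (h j); have := ltn_ord (g j).
move=> ? ?; apply: ord_inj.
have [Hq1|[Hq1|Hq1]] : (q <= -1 \/ q = 0 \/ 1 <= q)%R by lia.
- have : (0 <= (-1 - q) * Posz n)%R by apply: mulr_ge0; lia.
  rewrite mulrBl mulN1r; lia.
- have E : Posz (g j) = Posz (h j) by rewrite Hq1 mul0r in Hq; lia.
  by case: E.
- have : (0 <= (q - 1) * Posz n)%R by apply: mulr_ge0; lia.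
  rewrite mulrBl mul1r; lia.
Qed.
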